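(* Let $P : \mathcal{E}\to\mathcal{B}$ be a lax functor between bicategories which is fibered in pseudogroupoids. Then for each object $b$ of $\mathcal{B}$ the fiber bicategory $P^{-1}(b)$ is a pseudogroupoid.
   Context: For a lax functor $P$ with structure 2-cells $\varphi_{g,f} : Pg\circ Pf\Rightarrow P(g\circ f)$: a 1-morphism $f : x\to y$ of $\mathcal{E}$ is cartesian if (i) for every 1-morphism $g : z\to y$ in $\mathcal{E}$, 1-morphism $h : Pz\to Px$ in $\mathcal{B}$ and invertible 2-morphism $\alpha : Pf\circ h\Rightarrow Pg$, there exist a 1-morphism $\tilde h : z\to x$ and invertible 2-morphisms $\tilde\alpha : f\circ\tilde h\Rightarrow g$, $\tilde\beta : P\tilde h\Rightarrow h$ with $\alpha\cdot(Pf*\tilde\beta) = P\tilde\alpha\cdot\varphi_{f,\tilde h}$ (a ''lift'' of $(h,\alpha)$); and (ii) for every 2-morphism $\sigma : g\Rightarrow g'$ in $\mathcal{E}$, lifts $(\tilde h,\tilde\alpha,\tilde\beta)$ of $(h,\alpha)$ and $(\tilde h',\tilde\alpha',\tilde\beta')$ of $(h',\alpha')$ (with $\alpha' : Pf\circ h'\Rightarrow Pg'$), and every 2-morphism $\delta : h\Rightarrow h'$ with $\alpha'\cdot(Pf*\delta) = P\sigma\cdot\alpha$, there is a unique 2-morphism $\tilde\delta : \tilde h\Rightarrow\tilde h'$ with $\tilde\alpha'\cdot(f*\tilde\delta) = \sigma\cdot\tilde\alpha$ and $\tilde\beta'\cdot P\tilde\delta = \delta\cdot\tilde\beta$. $P$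 is fibered in pseudogroupoids if every 1-morphism of $\mathcal{E}$ is cartesian, every 1-morphism $f : b\to P(e)$ in $\mathcal{B}$ has a 1-morphism $\tilde f : e'\to e$ in $\mathcal{E}$ with $P\tilde f = f$, and each functor $P : \mathcal{E}(x,y)\to\mathcal{B}(Px,Py)$ is fibered in groupoids (every morphism cartesian in the usual 1-categorical sense and every morphism of $\mathcal{B}(Px,Py)$ into $P(u)$ lifts to a morphism into $u$). Cartesian lifts are assumed chosen (a cleavage). The fiber bicategory $P^{-1}(b)$ has as objects the objects $e$ with $Pe=b$, as 1-morphisms the 1-morphisms $h$ of $\mathcal{E}$ with $Ph=\mathrm{id}_b$, and as 2-morphisms the 2-morphisms $\alpha$ of $\mathcal{E}$ with $P\alpha=\mathrm{id}_{\mathrm{id}_b}$, with vertical composition as in $\mathcal{E}$. The composite $g\,\hat\circ\, f$ of 1-morphisms is the domain of the chosen cartesian lift (for the functor $P:\mathcal{E}(x,z)\to\mathcal{B}(b,b)$) at $g\circ f$ of the 2-morphism $\mathrm{id}_b\Rightarrow\mathrm{id}_b\circ\mathrm{id}_b = Pg\circ Pf\Rightarrow P(g\circ f)$ (inverse unitor followed by $\varphi_{g,f}$); horizontal composition of 2-morphisms, identities and coherence isomorphisms are induced by the universal property of these lifts. A pseudogroupoid is a bicategory in which every 1-morphism is an equivalence (has a pseudo-inverse $g$ with $g\circ f\cong\mathrm{id}$, $f\circ g\cong\mathrm{id}$) and every 2-morphism is invertible. *)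

(* Defs.v *)
From Stdlib Require Import Logic.

Set Implicit Arguments.
Unset Strict Implicit.

(* Bicategories (Bénabou), with strict equality of 2-morphisms.        *)
(* comp1 g f = g o f ; vcomp b a = b . a (first a, then b) ;           *)
Record bicat := Bicat {
  ob : Type;
  hom1 : ob -> ob -> Type;
  hom2 : forall x y : ob, hom1 x y -> hom1 x y -> Type;
  id1 : forall x : ob, hom1 x x;
  comp1 : forall x y z : ob, hom1 y z -> hom1 x y -> hom1 x z;
  id2 : forall (x y : ob) (f : hom1 x y), hom2 f f;
  vcomp : forall (x y : ob) (f g h : hom1 x y), hom2 g h -> hom2 f g -> hom2 f h;
  hcomp : forall (x y z : ob) (g g' : hom1 y z) (f f' : hom1 x y),
      hom2 g g' -> hom2 f f' -> hom2 (comp1 g f) (comp1 g' f');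
  lunit : forall (x y : ob) (f : hom1 x y), hom2 (comp1 (id1 y) f) f;
  lunit_inv : forall (x y : ob) (f : hom1 x y), hom2 f (comp1 (id1 y) f);
  runit : forall (x y : ob) (f : hom1 x y), hom2 (comp1 f (id1 x)) f;
  runit_inv : forall (x y : ob) (f : hom1 x y), hom2 f (comp1 f (id1 x));
  assoc : forall (w x y z : ob) (h : hom1 y z) (g : hom1 x y) (f : hom1 w x),
      hom2 (comp1 (comp1 h g) f) (comp1 h (comp1 g f));
  assoc_inv : forall (w x y z : ob) (h : hom1 y z) (g : hom1 x y) (f : hom1 w x),
      hom2 (comp1 h (comp1 g f)) (comp1 (comp1 h g) f);
  vcomp_assoc : forall (x y : ob) (f g h k : hom1 x y)
      (c : hom2 h k) (b : hom2 g h) (a : hom2 f g),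
      vcomp c (vcomp b a) = vcomp (vcomp c b) a;
  vcomp_id_l : forall (x y : ob) (f g : hom1 x y) (a : hom2 f g), vcomp (id2 g) a = a;
  vcomp_id_r : forall (x y : ob) (f g : hom1 x y) (a : hom2 f g), vcomp a (id2 f) = a;
  hcomp_id : forall (x y z : ob) (g : hom1 y z) (f : hom1 x y),
      hcomp (id2 g) (id2 f) = id2 (comp1 g f);
  hcomp_vcomp : forall (x y z : ob) (g g' g'' : hom1 y z) (f f' f'' : hom1 x y)
      (b' : hom2 g' g'') (b : hom2 g g') (a' : hom2 f' f'') (a : hom2 f f'),
      hcomp (vcomp b' b) (vcomp a' a) = vcomp (hcomp b' a') (hcomp b a);
  lunit_nat : forall (x y : ob) (f f' : hom1 x y) (a : hom2 f f'),
      vcomp a (lunit f) = vcomp (lunit f') (hcomp (id2 (id1 y)) a);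
  runit_nat : forall (x y : ob) (f f' : hom1 x y) (a : hom2 f f'),
      vcomp a (runit f) = vcomp (runit f') (hcomp a (id2 (id1 x)));
  assoc_nat : forall (w x y z : ob) (h h' : hom1 y z) (g g' : hom1 x y) (f f' : hom1 w x)
      (c : hom2 h h') (b : hom2 g g') (a : hom2 f f'),
      vcomp (hcomp c (hcomp b a)) (assoc h g f)
      = vcomp (assoc h' g' f') (hcomp (hcomp c b) a);
  lunit_inv_l : forall (x y : ob) (f : hom1 x y),
      vcomp (lunit_inv f) (lunit f) = id2 (comp1 (id1 y) f);
  lunit_inv_r : forall (x y : ob) (f : hom1 x y), vcomp (lunit f) (lunit_inv f) = id2 f;
  runit_inv_l : forall (x y : ob) (f : hom1 x y),
      vcomp (runit_inv f) (runit f) = id2 (comp1 f (id1 x));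
  runit_inv_r : forall (x y : ob) (f : hom1 x y), vcomp (runit f) (runit_inv f) = id2 f;
  assoc_inv_l : forall (w x y z : ob) (h : hom1 y z) (g : hom1 x y) (f : hom1 w x),
      vcomp (assoc_inv h g f) (assoc h g f) = id2 (comp1 (comp1 h g) f);
  assoc_inv_r : forall (w x y z : ob) (h : hom1 y z) (g : hom1 x y) (f : hom1 w x),
      vcomp (assoc h g f) (assoc_inv h g f) = id2 (comp1 h (comp1 g f));
  triangle : forall (x y z : ob) (g : hom1 y z) (f : hom1 x y),
      vcomp (hcomp (id2 g) (lunit f)) (assoc g (id1 y) f)
      = hcomp (runit g) (id2 f);
  pentagon : forall (v w x y z : ob) (k : hom1 y z) (h : hom1 x y) (g : hom1 w x)
      (f : hom1 v w),
      vcomp (assoc k h (comp1 g f)) (assoc (comp1 k h) g f)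
      = vcomp (hcomp (id2 k) (assoc h g f))
          (vcomp (assoc k (comp1 h g) f) (hcomp (assoc k h g) (id2 f)))
}.

Arguments hom1 {_} _ _.
Arguments hom2 {_ _ _} _ _.
Arguments id1 {_} _.
Arguments comp1 {_ _ _ _} _ _.
Arguments id2 {_ _ _} _.
Arguments vcomp {_ _ _ _ _ _} _ _.
Arguments hcomp {_ _ _ _ _ _ _ _} _ _.
Arguments lunit {_ _ _} _.
Arguments lunit_inv {_ _ _} _.
Arguments runit {_ _ _} _.
Arguments runit_inv {_ _ _} _.
Arguments assoc {_ _ _ _ _} _ _ _.
Arguments assoc_inv {_ _ _ _ _} _ _ _.

Definition invertible2 (C : bicat) (x y : ob C) (f g : hom1 x y) (a : hom2 f g) : Prop :=
  exists b : hom2 g f, vcomp b a = id2 f /\ vcomp a b = id2 g.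

Definition cast1 (C : bicat) (a a' c c' : ob C) (p : a = a') (q : c = c')
  (f : hom1 a c) : hom1 a' c' :=
  match p in _ = a0 return hom1 a0 c' with
  | eq_refl => match q in _ = c0 return hom1 a c0 with eq_refl => f end
  end.

Definition cast2 (C : bicat) (x y : ob C) (f f' g g' : hom1 x y)
  (p : f = f') (q : g = g') (a : hom2 f g) : hom2 f' g' :=
  match p in _ = f0 return hom2 f0 g' with
  | eq_refl => match q in _ = g0 return hom2 f g0 with eq_refl => a end
  end.

Record lax_functor (E B : bicat) := LaxFunctor {
  F0 : ob E -> ob B;
  F1 : forall x y : ob E, hom1 x y -> hom1 (F0 x) (F0 y);
  F2 : forall (x y : ob E) (f g : hom1 x y), hom2 f g -> hom2 (F1 f) (F1 g);
  lphi : forall (x y z : ob E) (g : hom1 y z) (f : hom1 x y),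
      hom2 (comp1 (F1 g) (F1 f)) (F1 (comp1 g f));
  lphi0 : forall x : ob E, hom2 (id1 (F0 x)) (F1 (id1 x));
  F2_id : forall (x y : ob E) (f : hom1 x y), F2 (id2 f) = id2 (F1 f);
  F2_vcomp : forall (x y : ob E) (f g h : hom1 x y) (b : hom2 g h) (a : hom2 f g),
      F2 (vcomp b a) = vcomp (F2 b) (F2 a);
  lphi_nat : forall (x y z : ob E) (g g' : hom1 y z) (f f' : hom1 x y)
      (b : hom2 g g') (a : hom2 f f'),
      vcomp (F2 (hcomp b a)) (lphi g f) = vcomp (lphi g' f') (hcomp (F2 b) (F2 a));
  lphi_assoc : forall (w x y z : ob E) (h : hom1 y z) (g : hom1 x y) (f : hom1 w x),
      vcomp (F2 (assoc h g f)) (vcomp (lphi (comp1 h g) f) (hcomp (lphi h g) (id2 (F1 f))))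
      = vcomp (lphi h (comp1 g f))
          (vcomp (hcomp (id2 (F1 h)) (lphi g f)) (assoc (F1 h) (F1 g) (F1 f)));
  lphi_lunit : forall (x y : ob E) (f : hom1 x y),
      lunit (F1 f)
      = vcomp (F2 (lunit f)) (vcomp (lphi (id1 y) f) (hcomp (lphi0 y) (id2 (F1 f))));
  lphi_runit : forall (x y : ob E) (f : hom1 x y),
      runit (F1 f)
      = vcomp (F2 (runit f)) (vcomp (lphi f (id1 x)) (hcomp (id2 (F1 f)) (lphi0 x)))
}.

Arguments F0 {_ _} _ _.
Arguments F1 {_ _} _ {_ _} _.
Arguments F2 {_ _} _ {_ _ _ _} _.
Arguments lphi {_ _} _ {_ _ _} _ _.
Arguments lphi0 {_ _} _ _.

Section Fibrations.
Variables (E B : bicat) (P : lax_functor E B).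

(* (h~, a~, b~) is a lift of (h, a) along f (context, condition (i)) *)
Definition is_lift (x y z : ob E) (f : hom1 x y) (g : hom1 z y)
  (h : hom1 (F0 P z) (F0 P x)) (a : hom2 (comp1 (F1 P f) h) (F1 P g))
  (ht : hom1 z x) (at_ : hom2 (comp1 f ht) g) (bt : hom2 (F1 P ht) h) : Prop :=
  invertible2 a /\ invertible2 at_ /\ invertible2 bt /\
  vcomp a (hcomp (id2 (F1 P f)) bt) = vcomp (F2 P at_) (lphi P f ht).

Definition cartesian1 (x y : ob E) (f : hom1 x y) : Prop :=
  (forall (z : ob E) (g : hom1 z y) (h : hom1 (F0 P z) (F0 P x))
     (a : hom2 (comp1 (F1 P f) h) (F1 P g)),
     invertible2 a ->
     exists (ht : hom1 z x) (at_ : hom2 (comp1 f ht) g) (bt : hom2 (F1 P ht) h),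
       is_lift a at_ bt)
  /\
  (forall (z : ob E) (g g' : hom1 z y) (s : hom2 g g')
     (h h' : hom1 (F0 P z) (F0 P x))
     (a : hom2 (comp1 (F1 P f) h) (F1 P g)) (a' : hom2 (comp1 (F1 P f) h') (F1 P g'))
     (ht : hom1 z x) (at_ : hom2 (comp1 f ht) g) (bt : hom2 (F1 P ht) h)
     (ht' : hom1 z x) (at' : hom2 (comp1 f ht') g') (bt' : hom2 (F1 P ht') h'),
     is_lift a at_ bt -> is_lift a' at' bt' ->
     forall d : hom2 h h',
       vcomp a' (hcomp (id2 (F1 P f)) d) = vcomp (F2 P s) a ->
       exists! dt : hom2 ht ht',
         vcomp at' (hcomp (id2 f) dt) = vcomp s at_ /\
         vcomp bt' (F2 P dt) = vcomp d bt).

(* cartesian morphism (1-categorical sense) for the functor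
   P : E(x,y) -> B(Px,Py) *)
Definition cartesian2 (x y : ob E) (v u : hom1 x y) (a : hom2 v u) : Prop :=
  forall (w : hom1 x y) (c : hom2 w u) (d : hom2 (F1 P w) (F1 P v)),
    vcomp (F2 P a) d = F2 P c ->
    exists! ct : hom2 w v, F2 P ct = d /\ vcomp a ct = c.

Definition local_fibered_in_groupoids (x y : ob E) : Prop :=
  (forall (v u : hom1 x y) (a : hom2 v u), cartesian2 a) /\
  (forall (u : hom1 x y) (k : hom1 (F0 P x) (F0 P y)) (b : hom2 k (F1 P u)),
     exists (v : hom1 x y) (e : F1 P v = k) (a : hom2 v u),
       cast2 e eq_refl (F2 P a) = b).

Definition fibered_in_pseudogroupoids : Prop :=
  (forall (x y : ob E) (f : hom1 x y), cartesian1 f) /\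
  (forall (e : ob E) (b : ob B) (f : hom1 b (F0 P e)),
     exists (e' : ob E) (p : F0 P e' = b) (ft : hom1 e' e),
       cast1 p eq_refl (F1 P ft) = f) /\
  (forall x y : ob E, local_fibered_in_groupoids x y).

(* A cleavage: chosen (cartesian) lifts for the local functors
   P : E(x,y) -> B(Px,Py).  (Every 2-morphism is cartesian when P is
   fibered in pseudogroupoids, so a chosen lift is a chosen cartesian lift.) *)
Definition cleavage : Type :=
  forall (x y : ob E) (u : hom1 x y) (k : hom1 (F0 P x) (F0 P y)) (b : hom2 k (F1 P u)),
    { v : hom1 x y & { e : F1 P v = k & { a : hom2 v u | cast2 e eq_refl (F2 P a) = b } } }.

(* The fiber bicategory P^{-1}(b).  An object is an object x of E with *)
(* a proof px : P x = b.  The 1-morphism id_b, seen as a 1-morphism     *)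
(* P x -> P y, is [idover px py].                                       *)
Definition idover (a c b : ob B) (pa : a = b) (pc : c = b) : hom1 a c :=
  match eq_sym pc in _ = c0 return hom1 a c0 with
  | eq_refl =>
      match eq_sym pa in _ = a0 return hom1 a0 b with eq_refl => id1 b end
  end.

Definition idover_comp (a c d b : ob B) (pa : a = b) (pc : c = b) (pd : d = b) :
  hom2 (idover pa pd) (comp1 (idover pc pd) (idover pa pc)).
Proof. destruct pa, pc, pd. exact (lunit_inv (id1 d)). Defined.

Definition idover_id (a b : ob B) (pa : a = b) : hom2 (idover pa pa) (id1 a).
Proof. destruct pa. exact (id2 (id1 a)). Defined.

Definition eqcell (x y : ob B) (f g : hom1 x y) (e : f = g) : hom2 f g :=
  match e in _ = g0 return hom2 f g0 with eq_refl => id2 f end.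

Definition fhom1 (b : ob B) (x y : ob E) (px : F0 P x = b) (py : F0 P y = b) : Type :=
  { h : hom1 x y & F1 P h = idover px py }.

Definition is_fhom2 (b : ob B) (x y : ob E) (px : F0 P x = b) (py : F0 P y = b)
  (h h' : fhom1 px py) (a : hom2 (projT1 h) (projT1 h')) : Prop :=
  cast2 (projT2 h) (projT2 h') (F2 P a) = id2 (idover px py).
Arguments is_fhom2 {b x y px py} h h' a.

(* the composite  k ^o h : domain of the chosen lift at k o h of
   id_b => id_b o id_b = Pk o Ph => P(k o h) *)
Definition fcomp (cl : cleavage) (b : ob B) (x y z : ob E)
  (px : F0 P x = b) (py : F0 P y = b) (pz : F0 P z = b)
  (k : fhom1 py pz) (h : fhom1 px py) : fhom1 px pz :=
  let bcell :=
    vcomp (lphi P (projT1 k) (projT1 h))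
      (vcomp (hcomp (eqcell (eq_sym (projT2 k))) (eqcell (eq_sym (projT2 h))))
         (idover_comp px py pz)) in
  let l := cl x z (comp1 (projT1 k) (projT1 h)) (idover px pz) bcell in
  existT _ (projT1 l) (projT1 (projT2 l)).

(* the identity of (x,px): domain of the chosen lift at id_x of
   id_b => id_{Px} => P(id_x) *)
Definition fid (cl : cleavage) (b : ob B) (x : ob E) (px : F0 P x = b) : fhom1 px px :=
  let bcell := vcomp (lphi0 P x) (idover_id px) in
  let l := cl x x (id1 x) (idover px px) bcell in
  existT _ (projT1 l) (projT1 (projT2 l)).

Definition finvertible2 (b : ob B) (x y : ob E) (px : F0 P x = b) (py : F0 P y = b)
  (h h' : fhom1 px py) (a : hom2 (projT1 h) (projT1 h')) : Prop :=
  exists a' : hom2 (projT1 h') (projT1 h),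
    is_fhom2 h' h a' /\ vcomp a' a = id2 (projT1 h) /\ vcomp a a' = id2 (projT1 h').
Arguments finvertible2 {b x y px py} h h' a.

Definition fiber_is_pseudogroupoid (cl : cleavage) (b : ob B) : Prop :=
  (forall (x y : ob E) (px : F0 P x = b) (py : F0 P y = b)
     (h h' : fhom1 px py) (a : hom2 (projT1 h) (projT1 h')),
     is_fhom2 h h' a -> finvertible2 h h' a)
  /\
  (forall (x y : ob E) (px : F0 P x = b) (py : F0 P y = b) (f : fhom1 px py),
     exists g : fhom1 py px,
       (exists a : hom2 (projT1 (fcomp cl g f)) (projT1 (fid cl px)),
          is_fhom2 (fcomp cl g f) (fid cl px) a /\
          finvertible2 (fcomp cl g f) (fid cl px) a) /\
       (exists a : hom2 (projT1 (fcomp cl f g)) (projT1 (fid cl py)),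
          is_fhom2 (fcomp cl f g) (fid cl py) a /\
          finvertible2 (fcomp cl f g) (fid cl py) a)).

End Fibrations.

(* Main.v *)
Require Import Defs.
From Stdlib Require Import ProofIrrelevance ClassicalEpsilon.

Set Implicit Arguments.
Unset Strict Implicit.

Notation "b • a" := (vcomp b a) (at level 40, left associativity).
Notation "b ⋆ a" := (hcomp b a) (at level 30, no associativity).

Section Bicat.
Variable C : bicat.

Lemma vA (x y : ob C) (f g h k : hom1 x y) (c : hom2 h k) (b : hom2 g h) (a : hom2 f g) :
  c • (b • a) = c • b • a.
Proof. apply vcomp_assoc. Qed.

Lemma eqcell_refl (x y : ob C) (f : hom1 x y) (e : f = f) : eqcell e = id2 f.
Proof. rewrite (proof_irrelevance _ e eq_refl). reflexivity. Qed.

Lemma eqcell_trans (x y : ob C) (f g h : hom1 x y) (p : f = g) (q : g = h) :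
  eqcell q • eqcell p = eqcell (eq_trans p q).
Proof. destruct q, p. simpl. apply vcomp_id_l. Qed.

Lemma eqcell_inv_l (x y : ob C) (f g : hom1 x y) (p : f = g) :
  eqcell (eq_sym p) • eqcell p = id2 f.
Proof. rewrite eqcell_trans. apply eqcell_refl. Qed.

Lemma eqcell_inv_r (x y : ob C) (f g : hom1 x y) (p : f = g) :
  eqcell p • eqcell (eq_sym p) = id2 g.
Proof. rewrite eqcell_trans. apply eqcell_refl. Qed.

Lemma cast2_eq (x y : ob C) (f f' g g' : hom1 x y) (p : f = f') (q : g = g') (a : hom2 f g) :
  cast2 p q a = eqcell q • a • eqcell (eq_sym p).
Proof. destruct p, q. simpl. rewrite vcomp_id_l, vcomp_id_r. reflexivity. Qed.

Lemma whl (x y z : ob C) (g : hom1 y z) (f f' f'' : hom1 x y) (a' : hom2 f' f'') (a : hom2 f f') :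
  id2 g ⋆ (a' • a) = (id2 g ⋆ a') • (id2 g ⋆ a).
Proof. rewrite <- hcomp_vcomp, vcomp_id_l. reflexivity. Qed.

Lemma whr (x y z : ob C) (g g' g'' : hom1 y z) (f : hom1 x y) (b' : hom2 g' g'') (b : hom2 g g') :
  (b' • b) ⋆ id2 f = (b' ⋆ id2 f) • (b ⋆ id2 f).
Proof. rewrite <- hcomp_vcomp, vcomp_id_l. reflexivity. Qed.

Lemma xchg1 (x y z : ob C) (g g' : hom1 y z) (f f' : hom1 x y) (b : hom2 g g') (a : hom2 f f') :
  b ⋆ a = (b ⋆ id2 f') • (id2 g ⋆ a).
Proof. rewrite <- hcomp_vcomp, vcomp_id_l, vcomp_id_r. reflexivity. Qed.

Lemma xchg2 (x y z : ob C) (g g' : hom1 y z) (f f' : hom1 x y) (b : hom2 g g') (a : hom2 f f') :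
  b ⋆ a = (id2 g' ⋆ a) • (b ⋆ id2 f).
Proof. rewrite <- hcomp_vcomp, vcomp_id_l, vcomp_id_r. reflexivity. Qed.

Lemma rcancel (x y : ob C) (f g h : hom1 x y) (X Y : hom2 g h) (Z : hom2 f g) (Zi : hom2 g f) :
  Z • Zi = id2 g -> X • Z = Y • Z -> X = Y.
Proof.
  intros H1 H2. rewrite <- (vcomp_id_r X), <- (vcomp_id_r Y), <- H1, !vA, H2. reflexivity.
Qed.

Lemma lcancel (x y : ob C) (f g h : hom1 x y) (X Y : hom2 f g) (Z : hom2 g h) (Zi : hom2 h g) :
  Zi • Z = id2 g -> Z • X = Z • Y -> X = Y.
Proof.
  intros H1 H2. rewrite <- (vcomp_id_l X), <- (vcomp_id_l Y), <- H1, <- !vA, H2. reflexivity.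
Qed.

Lemma lunit_cancel (x y : ob C) (f g : hom1 x y) (a b : hom2 f g) :
  id2 (id1 y) ⋆ a = id2 (id1 y) ⋆ b -> a = b.
Proof.
  intro H. apply (rcancel (lunit_inv_r f)).
  rewrite !lunit_nat, H. reflexivity.
Qed.

Lemma runit_cancel (x y : ob C) (f g : hom1 x y) (a b : hom2 f g) :
  a ⋆ id2 (id1 x) = b ⋆ id2 (id1 x) -> a = b.
Proof.
  intro H. apply (rcancel (runit_inv_r f)).
  rewrite !runit_nat, H. reflexivity.
Qed.

Lemma kellyA (x y z : ob C) (g : hom1 y z) (f : hom1 x y) :
  lunit (comp1 g f) • assoc (id1 z) g f = lunit g ⋆ id2 f.
Proof.
  apply lunit_cancel.
  set (Zi := (assoc_inv (id1 z) (id1 z) g ⋆ id2 f) • assoc_inv (id1 z) (comp1 (id1 z) g) f).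
  apply (rcancel (Z := assoc (id1 z) (comp1 (id1 z) g) f • (assoc (id1 z) (id1 z) g ⋆ id2 f)) (Zi := Zi)).
  { unfold Zi. rewrite vA, <- (vA (assoc _ _ _) (assoc _ _ _ ⋆ _)), <- whr, assoc_inv_r, hcomp_id, vcomp_id_r, assoc_inv_r.
    reflexivity. }
  rewrite whl, <- !vA, <- pentagon, vA, triangle, <- hcomp_id, assoc_nat, <- triangle, whr.
  rewrite (vA (id2 _ ⋆ (lunit g ⋆ _))), assoc_nat, <- !vA. reflexivity.
Qed.

Lemma kellyA' (x y z : ob C) (g : hom1 y z) (f : hom1 x y) :
  (lunit g ⋆ id2 f) • assoc_inv (id1 z) g f = lunit (comp1 g f).
Proof. rewrite <- kellyA, <- vA, assoc_inv_r, vcomp_id_r. reflexivity. Qed.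

Lemma lunit_ii (x : ob C) : lunit (comp1 (id1 x) (id1 x)) = id2 (id1 x) ⋆ lunit (id1 x).
Proof.
  apply (lcancel (Z := lunit (id1 x)) (Zi := lunit_inv (id1 x))). apply lunit_inv_l.
  apply lunit_nat.
Qed.

Lemma kellyB (x : ob C) : lunit (id1 x) = runit (id1 x).
Proof.
  apply runit_cancel. rewrite <- kellyA, <- triangle, lunit_ii. reflexivity.
Qed.


Lemma inv_id (x y : ob C) (f : hom1 x y) : invertible2 (id2 f).
Proof. exists (id2 f). rewrite vcomp_id_l. auto. Qed.

Lemma inv_vcomp (x y : ob C) (f g h : hom1 x y) (b : hom2 g h) (a : hom2 f g) :
  invertible2 b -> invertible2 a -> invertible2 (b • a).
Proof.
  intros [bi [Hb1 Hb2]] [ai [Ha1 Ha2]]. exists (ai • bi). split.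
  - rewrite vA, <- (vA ai), Hb1, vcomp_id_r. auto.
  - rewrite vA, <- (vA b), Ha2, vcomp_id_r. auto.
Qed.

Lemma inv_hcomp (x y z : ob C) (g g' : hom1 y z) (f f' : hom1 x y) (b : hom2 g g') (a : hom2 f f') :
  invertible2 b -> invertible2 a -> invertible2 (b ⋆ a).
Proof.
  intros [bi [Hb1 Hb2]] [ai [Ha1 Ha2]]. exists (bi ⋆ ai). split.
  - rewrite <- hcomp_vcomp, Hb1, Ha1. apply hcomp_id.
  - rewrite <- hcomp_vcomp, Hb2, Ha2. apply hcomp_id.
Qed.

Lemma inv_eqcell (x y : ob C) (f g : hom1 x y) (p : f = g) : invertible2 (eqcell p).
Proof. exists (eqcell (eq_sym p)). split. apply eqcell_inv_l. apply eqcell_inv_r. Qed.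

Lemma inv_lunit (x y : ob C) (f : hom1 x y) : invertible2 (lunit f).
Proof. exists (lunit_inv f). split. apply lunit_inv_l. apply lunit_inv_r. Qed.
Lemma inv_lunit_inv (x y : ob C) (f : hom1 x y) : invertible2 (lunit_inv f).
Proof. exists (lunit f). split. apply lunit_inv_r. apply lunit_inv_l. Qed.
Lemma inv_runit (x y : ob C) (f : hom1 x y) : invertible2 (runit f).
Proof. exists (runit_inv f). split. apply runit_inv_l. apply runit_inv_r. Qed.
Lemma inv_runit_inv (x y : ob C) (f : hom1 x y) : invertible2 (runit_inv f).
Proof. exists (runit f). split. apply runit_inv_r. apply runit_inv_l. Qed.
Lemma inv_assoc (w x y z : ob C) (h : hom1 y z) (g : hom1 x y) (f : hom1 w x) :
  invertible2 (assoc h g f).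
Proof. exists (assoc_inv h g f). split. apply assoc_inv_l. apply assoc_inv_r. Qed.
Lemma inv_assoc_inv (w x y z : ob C) (h : hom1 y z) (g : hom1 x y) (f : hom1 w x) :
  invertible2 (assoc_inv h g f).
Proof. exists (assoc h g f). split. apply assoc_inv_r. apply assoc_inv_l. Qed.

Lemma inv_sym (x y : ob C) (f g : hom1 x y) (a : hom2 f g) (b : hom2 g f) :
  b • a = id2 f -> a • b = id2 g -> invertible2 b.
Proof. intros. exists a. auto. Qed.

Lemma inv_of_l (x y : ob C) (f g h : hom1 x y) (b : hom2 g h) (a : hom2 f g) :
  invertible2 (b • a) -> invertible2 b -> invertible2 a.
Proof.
  intros H [bi [Hb1 Hb2]].
  replace a with (bi • (b • a)) by (rewrite vA, Hb1; apply vcomp_id_l).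
  apply inv_vcomp; auto. exists b; auto.
Qed.

Lemma inv_of_r (x y : ob C) (f g h : hom1 x y) (b : hom2 g h) (a : hom2 f g) :
  invertible2 (b • a) -> invertible2 a -> invertible2 b.
Proof.
  intros H [ai [Ha1 Ha2]].
  replace b with ((b • a) • ai) by (rewrite <- vA, Ha2; apply vcomp_id_r).
  apply inv_vcomp; auto. exists a; auto.
Qed.


Lemma sandwich (x y : ob C) (f f' g g' : hom1 x y) (p : f = f') (q : g = g') (X : hom2 f g) (Y : hom2 f' g') :
  eqcell q • X • eqcell (eq_sym p) = Y -> X = eqcell (eq_sym q) • Y • eqcell p.
Proof.
  intro H; subst Y. rewrite !vA, eqcell_inv_l, vcomp_id_l, <- vA, eqcell_inv_l, vcomp_id_r.
  reflexivity.
Qed.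

Lemma cast_refl_eq (x y : ob C) (f f' g : hom1 x y) (e : f = f') (X : hom2 f g) (Y : hom2 f' g) :
  cast2 e eq_refl X = Y -> X = Y • eqcell e.
Proof.
  rewrite cast2_eq. intro H. apply sandwich in H. rewrite H. simpl. rewrite vcomp_id_l. reflexivity.
Qed.


Definition idover_comp_inv (a c d b : ob C) (pa : a = b) (pc : c = b) (pd : d = b) :
  hom2 (comp1 (idover pc pd) (idover pa pc)) (idover pa pd).
Proof. destruct pa, pc, pd. exact (lunit (id1 d)). Defined.

Lemma idover_comp_inv_l (a c d b : ob C) (pa : a = b) (pc : c = b) (pd : d = b) :
  idover_comp_inv pa pc pd • idover_comp pa pc pd = id2 _.
Proof. destruct pa, pc, pd. apply lunit_inv_r. Qed.

Lemma idover_comp_inv_r (a c d b : ob C) (pa : a = b) (pc : c = b) (pd : d = b) :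
  idover_comp pa pc pd • idover_comp_inv pa pc pd = id2 _.
Proof. destruct pa, pc, pd. apply lunit_inv_l. Qed.

Lemma inv_idover_comp_inv (a c d b : ob C) (pa : a = b) (pc : c = b) (pd : d = b) :
  invertible2 (idover_comp_inv pa pc pd).
Proof. exists (idover_comp pa pc pd). split. apply idover_comp_inv_r. apply idover_comp_inv_l. Qed.

Lemma inv_idover_id (a b : ob C) (pa : a = b) : invertible2 (idover_id pa).
Proof. destruct pa. apply inv_id. Qed.


Lemma eqcell_pi (x y : ob C) (f g : hom1 x y) (p q : f = g) : eqcell p = eqcell q.
Proof. rewrite (proof_irrelevance _ p q). reflexivity. Qed.


Lemma coh_main (a c b : ob C) (pa : a = b) (pc : c = b) (F : hom1 a c) (G : hom1 c a)
  (ef : F = idover pa pc) (eg : G = idover pc pa) :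
  lunit F • ((idover_id pc • idover_comp_inv pc pa pc • (eqcell ef ⋆ eqcell eg)) ⋆ id2 F)
  • assoc_inv F G F • (id2 F ⋆ ((eqcell (eq_sym eg) ⋆ eqcell (eq_sym ef)) • idover_comp pa pc pa))
  = runit F • (id2 F ⋆ idover_id pa).
Proof.
  subst F G. destruct pa. destruct pc. cbn.
  rewrite !hcomp_id, !vcomp_id_l, !vcomp_id_r.
  rewrite <- (vA (lunit _)), kellyA', <- vA, <- lunit_nat, vA, lunit_inv_r, vcomp_id_l.
  apply kellyB.
Qed.

End Bicat.

Section Lax.
Variables (E B : bicat) (P : lax_functor E B).

Lemma F2_inv (x y : ob E) (f g : hom1 x y) (a : hom2 f g) :
  invertible2 a -> invertible2 (F2 P a).
Proof.
  intros [ai [H1 H2]]. exists (F2 P ai). split.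
  - rewrite <- F2_vcomp, H1. apply F2_id.
  - rewrite <- F2_vcomp, H2. apply F2_id.
Qed.

Lemma lphi_assoc_inv (w x y z : ob E) (h : hom1 y z) (g : hom1 x y) (f : hom1 w x) :
  F2 P (assoc_inv h g f) • lphi P h (comp1 g f) • (id2 (F1 P h) ⋆ lphi P g f)
  = lphi P (comp1 h g) f • (lphi P h g ⋆ id2 (F1 P f)) • assoc_inv (F1 P h) (F1 P g) (F1 P f).
Proof.
  apply (rcancel (Z := assoc (F1 P h) (F1 P g) (F1 P f)) (Zi := assoc_inv _ _ _)).
  apply assoc_inv_r.
  rewrite <- (vA _ (assoc_inv _ _ _)), assoc_inv_l, vcomp_id_r.
  rewrite <- !vA, <- lphi_assoc, !vA, <- F2_vcomp, assoc_inv_l, F2_id, vcomp_id_l.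
  reflexivity.
Qed.

Lemma lphi_transfer (x y z : ob E) (f : hom1 y z) (m m' : hom1 x y) (mu : hom2 m m') :
  invertible2 (lphi P f m) -> invertible2 mu -> invertible2 (lphi P f m').
Proof.
  intros H Hmu.
  pose proof (lphi_nat P (id2 f) mu) as Hn. rewrite F2_id in Hn.
  apply (inv_of_r (a := id2 (F1 P f) ⋆ F2 P mu)).
  - rewrite <- Hn. apply inv_vcomp; auto. apply F2_inv, inv_hcomp; auto. apply inv_id.
  - apply inv_hcomp. apply inv_id. apply F2_inv; auto.
Qed.


Hypothesis HP : fibered_in_pseudogroupoids P.

Lemma reflect_inv (x y : ob E) (v u : hom1 x y) (a : hom2 v u) :
  invertible2 (F2 P a) -> invertible2 a.
Proof.
  intros [di [H1 H2]].
  destruct HP as [_ [_ Hloc]]. destruct (Hloc x y) as [Hc _].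
  destruct (Hc v u a u (id2 u) di) as [ct [[Hct1 Hct2] _]].
  { rewrite H2, F2_id. reflexivity. }
  exists ct. split; [| exact Hct2].
  destruct (Hc v u a v a (id2 (F1 P v))) as [ct0 [_ Hu]].
  { apply vcomp_id_r. }
  transitivity ct0.
  - symmetry. apply Hu. split.
    + rewrite F2_vcomp, Hct1, H1. reflexivity.
    + rewrite vA, Hct2. apply vcomp_id_l.
  - apply Hu. split. apply F2_id. apply vcomp_id_r.
Qed.

Lemma lphi0_inv (x : ob E) : invertible2 (lphi0 P x).
Proof.
  destruct HP as [Hcart _].
  destruct (proj1 (Hcart x x (id1 x)) x (id1 x) (id1 (F0 P x)) (runit (F1 P (id1 x))) (inv_runit _))
    as [ht [at_ [bt [Ha [Hat [Hbt Heq]]]]]].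
  assert (H1 : invertible2 (lphi P (id1 x) ht)).
  { apply (inv_of_l (b := F2 P at_)). rewrite <- Heq. apply inv_vcomp; auto.
    apply inv_hcomp; auto. apply inv_id. apply F2_inv; auto. }
  assert (H2 : invertible2 (lphi0 P x ⋆ id2 (F1 P ht))).
  { pose proof (lphi_lunit P ht) as HL.
    apply (inv_of_l (b := lphi P (id1 x) ht)); auto.
    apply (inv_of_l (b := F2 P (lunit ht))). rewrite <- HL. apply inv_lunit.
    apply F2_inv, inv_lunit. }
  assert (H3 : invertible2 (lphi0 P x ⋆ id2 (id1 (F0 P x)))).
  { apply (inv_of_r (a := id2 (id1 (F0 P x)) ⋆ bt)).
    rewrite <- xchg1, xchg2. apply inv_vcomp; auto. apply inv_hcomp; auto. apply inv_id.
    apply inv_hcomp; auto. apply inv_id. }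
  apply (inv_of_r (a := runit (id1 (F0 P x)))).
  rewrite runit_nat. apply inv_vcomp; [apply inv_runit | exact H3]. apply inv_runit.
Qed.

Lemma fiber_2cells_inv (b : ob B) (x y : ob E) (px : F0 P x = b) (py : F0 P y = b)
     (h h' : fhom1 px py) (a : hom2 (projT1 h) (projT1 h')) :
     @is_fhom2 E B P b x y px py h h' a -> @finvertible2 E B P b x y px py h h' a.
Proof.
  destruct h as [h eh], h' as [h' eh']. unfold is_fhom2, finvertible2. cbn in a |- *.
  intro Ha. rewrite cast2_eq in Ha. apply sandwich in Ha. rewrite vcomp_id_r in Ha.
  assert (Hi : invertible2 a).
  { apply reflect_inv. rewrite Ha. apply inv_vcomp; apply inv_eqcell. }
  destruct Hi as [bi [Hb1 Hb2]]. exists bi. split; [| split; auto].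
  unfold is_fhom2. simpl.
  assert (HF : F2 P bi = eqcell (eq_sym eh) • eqcell eh').
  { assert (HX : F2 P a • (eqcell (eq_sym eh) • eqcell eh') = id2 _)
      by (rewrite Ha, !vA, !eqcell_trans; apply eqcell_refl).
    rewrite <- (vcomp_id_r (F2 P bi)), <- HX, vA, <- F2_vcomp, Hb1, F2_id, vcomp_id_l.
    reflexivity. }
  rewrite cast2_eq, HF, !vA, !eqcell_trans. apply eqcell_refl.
Qed.


Lemma right_inv (b : ob B) (x y : ob E) (px : F0 P x = b) (py : F0 P y = b) (f : fhom1 px py) :
  exists (g : fhom1 py px) (rho : hom2 (comp1 (projT1 f) (projT1 g)) (id1 y)),
    invertible2 rho /\ invertible2 (lphi P (projT1 f) (projT1 g)) /\
    F2 P rho • (lphi P (projT1 f) (projT1 g) •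
      ((eqcell (eq_sym (projT2 f)) ⋆ eqcell (eq_sym (projT2 g))) • idover_comp py px py))
    = lphi0 P y • idover_id py.
Proof.
  destruct f as [f ef]. cbn.
  pose proof HP as [Hcart [_ Hloc]].
  destruct (proj2 (Hloc y y) (id1 y) (id1 (F0 P y)) (lphi0 P y)) as [v [ev [av Hav]]].
  apply cast_refl_eq in Hav.
  set (al := eqcell (eq_sym ev) • idover_id py • idover_comp_inv py px py
             • (eqcell ef ⋆ id2 (idover py px))).
  assert (Hal : invertible2 al).
  { unfold al. repeat apply inv_vcomp; try apply inv_eqcell; try apply inv_idover_id;
    try apply inv_idover_comp_inv. apply inv_hcomp. apply inv_eqcell. apply inv_id. }
  destruct (proj1 (Hcart x y f) y v (idover py px) al Hal)
    as [ht [at_ [bt [_ [Hat [Hbt Heq]]]]]].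
  pose proof Hbt as [bi [Hb1 Hb2]].
  destruct (proj2 (Hloc y x) ht (idover py px) bi) as [g [eg [ga Hga]]].
  apply cast_refl_eq in Hga.
  assert (Hgainv : invertible2 ga).
  { apply reflect_inv. rewrite Hga. apply inv_vcomp. exists bt; auto. apply inv_eqcell. }
  assert (Havinv : invertible2 av).
  { apply reflect_inv. rewrite Hav. apply inv_vcomp. apply lphi0_inv. apply inv_eqcell. }
  exists (existT _ g eg). cbn. exists (av • at_ • (id2 f ⋆ ga)).
  split; [| split].
  - repeat apply inv_vcomp; auto. apply inv_hcomp; auto. apply inv_id.
  - assert (Hl : invertible2 (lphi P f ht)).
    { apply (inv_of_l (b := F2 P at_)). rewrite <- Heq. apply inv_vcomp; auto.
      apply inv_hcomp; auto. apply inv_id. apply F2_inv; auto. }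
    destruct Hgainv as [gi [Hg1 Hg2]].
    apply (lphi_transfer (mu := gi)); auto. exists ga; auto.
  - rewrite !F2_vcomp, <- !vA.
    rewrite (vA (F2 P (id2 f ⋆ ga))), lphi_nat, F2_id.
    rewrite <- (vA (lphi P f ht)), (vA (F2 P at_)), <- Heq.
    rewrite Hga, <- (vA al), (vA (id2 _ ⋆ bt)), <- whl, (vA bt), Hb2, vcomp_id_l.
    rewrite (vA (id2 _ ⋆ eqcell eg)), <- hcomp_vcomp, vcomp_id_l, eqcell_inv_r.
    unfold al. rewrite !vA.
    rewrite <- (vA _ (eqcell ef ⋆ _) (eqcell (eq_sym ef) ⋆ _)), <- whr, eqcell_inv_r, hcomp_id,
      vcomp_id_r.
    rewrite <- (vA _ (idover_comp_inv _ _ _)), idover_comp_inv_l, vcomp_id_r.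
    rewrite Hav, <- (vA _ (eqcell ev)), eqcell_inv_r, vcomp_id_r. reflexivity.
Qed.


Lemma lphi_nat_r (x y z : ob E) (g g' : hom1 y z) (f f' : hom1 x y) (b : hom2 g g') (a : hom2 f f')
  (u : hom1 (F0 P x) (F0 P z)) (R : hom2 u (comp1 (F1 P g) (F1 P f))) :
  F2 P (b ⋆ a) • (lphi P g f • R) = lphi P g' f' • ((F2 P b ⋆ F2 P a) • R).
Proof. rewrite !vA, lphi_nat. reflexivity. Qed.

Lemma lphi_assoc_inv_r (w x y z : ob E) (h : hom1 y z) (g : hom1 x y) (f : hom1 w x)
  (u : hom1 (F0 P w) (F0 P z)) (R : hom2 u (comp1 (F1 P h) (comp1 (F1 P g) (F1 P f)))) :
  F2 P (assoc_inv h g f) • (lphi P h (comp1 g f) • ((id2 (F1 P h) ⋆ lphi P g f) • R))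
  = lphi P (comp1 h g) f • ((lphi P h g ⋆ id2 (F1 P f)) • (assoc_inv (F1 P h) (F1 P g) (F1 P f) • R)).
Proof. rewrite !vA, lphi_assoc_inv. reflexivity. Qed.

Lemma lphi_lunit_r (x y : ob E) (f : hom1 x y) (u : hom1 (F0 P x) (F0 P y))
  (R : hom2 u (comp1 (id1 (F0 P y)) (F1 P f))) :
  F2 P (lunit f) • (lphi P (id1 y) f • ((lphi0 P y ⋆ id2 (F1 P f)) • R)) = lunit (F1 P f) • R.
Proof. rewrite !vA, <- (vA (F2 P (lunit f))), <- lphi_lunit. reflexivity. Qed.

Lemma fcomp_to_fid (cl : cleavage P) (b : ob B) (x y : ob E) (px : F0 P x = b) (py : F0 P y = b)
  (k : fhom1 py px) (h : fhom1 px py) (ka : hom2 (comp1 (projT1 k) (projT1 h)) (id1 x)) :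
  F2 P ka • (lphi P (projT1 k) (projT1 h) •
      ((eqcell (eq_sym (projT2 k)) ⋆ eqcell (eq_sym (projT2 h))) • idover_comp px py px))
    = lphi0 P x • idover_id px ->
  exists a : hom2 (projT1 (fcomp cl k h)) (projT1 (fid cl px)),
    @is_fhom2 E B P b x x px px (fcomp cl k h) (fid cl px) a.
Proof.
  intro Hka.
  pose proof HP as [_ [_ Hloc]].
  unfold fcomp, fid. cbn zeta.
  destruct (cl x x (id1 x) _ _) as [v0 [e0 [a0 Ha0]]].
  destruct (cl x x (comp1 _ _) _ _) as [w [ew [cw Hcw]]].
  unfold is_fhom2. cbn. apply cast_refl_eq in Ha0. apply cast_refl_eq in Hcw.
  unfold is_fhom2. cbn.
  destruct (proj1 (Hloc x x) v0 (id1 x) a0 w (ka • cw) (eqcell (eq_trans ew (eq_sym e0))))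
    as [ct [[Hct1 _] _]].
  { rewrite Ha0, F2_vcomp, Hcw, <- !vA, eqcell_trans.
    rewrite (vA _ (idover_comp _ _ _)), (vA (lphi _ _ _)), (vA (F2 P ka)), Hka, <- vA.
    do 2 f_equal. apply eqcell_pi. }
  exists ct. rewrite cast2_eq, Hct1, !eqcell_trans. apply eqcell_refl.
Qed.


Lemma left_side (cl : cleavage P) (b : ob B) (x y : ob E) (px : F0 P x = b) (py : F0 P y = b)
  (f : fhom1 px py) (g : fhom1 py px) (rho : hom2 (comp1 (projT1 f) (projT1 g)) (id1 y)) :
  invertible2 rho ->
  F2 P rho • (lphi P (projT1 f) (projT1 g) •
      ((eqcell (eq_sym (projT2 f)) ⋆ eqcell (eq_sym (projT2 g))) • idover_comp py px py))
    = lphi0 P y • idover_id py ->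
  invertible2 (lphi P (projT1 g) (projT1 f)) ->
  exists a : hom2 (projT1 (fcomp cl g f)) (projT1 (fid cl px)),
    @is_fhom2 E B P b x x px px (fcomp cl g f) (fid cl px) a.
Proof.
  intros Hrho Hcond Hgf.
  pose proof HP as [Hcart [_ Hloc]].
  destruct f as [f ef], g as [g eg]. cbn in rho, Hcond, Hgf |- *.
  unfold fcomp, fid. cbn zeta.
  destruct (cl x x (id1 x) _ _) as [v0 [e0 [a0 Ha0]]].
  destruct (cl x x (comp1 _ _) _ _) as [w [ew [cw Hcw]]].
  unfold is_fhom2. cbn. apply cast_refl_eq in Ha0. apply cast_refl_eq in Hcw.
  assert (Ha0i : invertible2 a0).
  { apply reflect_inv. rewrite Ha0. repeat apply inv_vcomp; try apply inv_eqcell.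
    apply lphi0_inv. apply inv_idover_id. }
  assert (Hcwi : invertible2 cw).
  { apply reflect_inv. rewrite Hcw. repeat apply inv_vcomp; try apply inv_eqcell; auto.
    apply inv_hcomp; apply inv_eqcell. exists (idover_comp_inv px py px).
    split. apply idover_comp_inv_l. apply idover_comp_inv_r. }
  set (aB := runit (F1 P f) • (id2 (F1 P f) ⋆ idover_id px)).
  set (atB := runit f • (id2 f ⋆ a0)).
  set (atA := lunit f • (rho ⋆ id2 f) • assoc_inv f g f • (id2 f ⋆ cw)).
  assert (HQ : F2 P rho • lphi P f g
     = lphi0 P y • (idover_id py • (idover_comp_inv py px py • (eqcell ef ⋆ eqcell eg)))).
  { apply (rcancel (Z := (eqcell (eq_sym ef) ⋆ eqcell (eq_sym eg)) • idover_comp py px py)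
                   (Zi := idover_comp_inv py px py • (eqcell ef ⋆ eqcell eg))).
    - rewrite <- !vA, (vA (idover_comp _ _ _)), idover_comp_inv_r, vcomp_id_l, <- hcomp_vcomp,
        !eqcell_inv_l, hcomp_id. reflexivity.
    - rewrite <- (vA (F2 P rho)), Hcond, <- !vA, (vA (eqcell ef ⋆ eqcell eg)), <- hcomp_vcomp,
        !eqcell_inv_r, hcomp_id, vcomp_id_l, idover_comp_inv_l, vcomp_id_r. reflexivity. }
  assert (HaB : invertible2 aB).
  { apply inv_vcomp. apply inv_runit. apply inv_hcomp. apply inv_id. apply inv_idover_id. }
  assert (LB : is_lift aB atB (eqcell e0)).
  { split; [exact HaB | split; [| split]].
    - apply inv_vcomp. apply inv_runit. apply inv_hcomp; auto. apply inv_id.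
    - apply inv_eqcell.
    - unfold aB, atB. rewrite F2_vcomp, <- (vA (F2 P (runit f))), lphi_nat, F2_id, Ha0.
      rewrite !whl, !vA, <- (vA (F2 P (runit f))), <- lphi_runit. reflexivity. }
  assert (LA : is_lift aB atA (eqcell ew)).
  { split; [exact HaB | split; [| split]].
    - unfold atA. repeat apply inv_vcomp; try apply inv_hcomp; auto using inv_id, inv_lunit, inv_assoc_inv.
    - apply inv_eqcell.
    - unfold atA. rewrite !F2_vcomp.
      rewrite <- (vA _ (F2 P (id2 f ⋆ cw))), lphi_nat, F2_id, Hcw.
      rewrite !whl, <- !vA, lphi_assoc_inv_r, lphi_nat_r, F2_id, (vA (F2 P rho ⋆ _)), <- whr.
      rewrite HQ, whr, <- (vA (lphi0 P y ⋆ _)), lphi_lunit_r.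
      pose proof (coh_main ef eg) as HC.
      unfold aB. rewrite ?whl, ?whr, <- ?vA in HC. rewrite ?whl, ?whr, <- ?vA.
      rewrite (vA (runit _)), <- HC, <- !vA. reflexivity. }
  destruct (proj2 (Hcart x y f) x f f (id2 f) (idover px px) (idover px px) aB aB
              w atA (eqcell ew) v0 atB (eqcell e0) LA LB (id2 _)) as [dt [[_ Hdt] _]].
  { rewrite hcomp_id, vcomp_id_r, F2_id, vcomp_id_l. reflexivity. }
  exists dt. rewrite cast2_eq, Hdt, vcomp_id_l, eqcell_trans. apply eqcell_refl.
Qed.

End Lax.


Theorem proposition3p26 (E B : bicat) (P : lax_functor E B) :
  fibered_in_pseudogroupoids P ->
  forall (cl : cleavage P) (b : ob B), fiber_is_pseudogroupoid cl b.
Proof.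
  intros HP cl b. split.
  - intros x y px py h h' a Ha. apply fiber_2cells_inv; auto.
  - intros x y px py f.
    destruct (right_inv HP f) as [g [rho [Hrho [Hfg Hc]]]].
    destruct (right_inv HP g) as [f2 [rho2 [Hrho2 [Hgf2 Hc2]]]].
    exists g. split.
    + assert (Heps : invertible2 (lunit (projT1 f2) • (rho ⋆ id2 (projT1 f2))
              • assoc_inv (projT1 f) (projT1 g) (projT1 f2)
              • (id2 (projT1 f) ⋆ (proj1_sig (constructive_indefinite_description _ Hrho2)))
              • runit_inv (projT1 f))).
      { destruct (constructive_indefinite_description _ Hrho2) as [ri [Hr1 Hr2]]. cbn.
        repeat apply inv_vcomp; try apply inv_hcomp;
          auto using inv_lunit, inv_id, inv_assoc_inv, inv_runit_inv.
        exists rho2; auto. }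
      destruct Heps as [mu [Hm1 Hm2]].
      assert (Hgf : invertible2 (lphi P (projT1 g) (projT1 f))).
      { apply (lphi_transfer (mu := mu)); auto. eexists; split; eauto. }
      destruct (left_side HP cl Hrho Hc Hgf) as [a Ha].
      exists a. split; auto. apply fiber_2cells_inv; auto.
    + destruct (fcomp_to_fid HP cl Hc) as [a Ha].
      exists a. split; auto. apply fiber_2cells_inv; auto.
Qed.
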